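(* Let $\mathcal{D}$ be the class of all finite digraphs and let $D\in\mathcal{D}$. The class $\mathrm{Av}(D)=\{E\in\mathcal{D}: D\not\preceq E\}$, with respect to the strong homomorphic image ordering $\preceq$, is well quasi-ordered if and only if $D$ is isomorphic to the complete digraph $\overrightarrow{K}_n$ for some $n\ge1$.
   Context: A digraph is a set $D$ with a binary relation $E(D)\subseteq D\times D$ (loops allowed). $\overrightarrow{K}_n$ is the digraph on $\{1,\dots,n\}$ with edge set $\{(i,j):1\le i,j\le n\}$ (all ordered pairs, including loops). A homomorphism maps edges to edges; it is strong if additionally every edge of the target between vertices of the image is the image of an edge. Strong homomorphic image ordering: $A\preceq B$ iff there is a surjective strong homomorphism $B\to A$. Well quasi-ordered means no infinite strictly decreasing sequence and no infinite antichain; digraphs considered up to isomorphism. *)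

(* Defs.v *)
From mathcomp Require Import all_boot.
Set Implicit Arguments. Unset Strict Implicit. Unset Printing Implicit Defensive.

(* A finite digraph: vertex set {0,..,n-1} (any finite set up to relabelling),
   edge relation E (loops allowed). *)
Record digraph := Digraph { dg_n : nat; dg_E : rel 'I_dg_n }.

Definition vert (D : digraph) := 'I_(dg_n D).

Definition is_hom (B A : digraph) (f : vert B -> vert A) : Prop :=
  forall x y, dg_E x y -> dg_E (f x) (f y).

Definition is_strong_hom (B A : digraph) (f : vert B -> vert A) : Prop :=
  is_hom f /\
  forall x y : vert B, dg_E (f x) (f y) ->
    exists x' y' : vert B, [/\ f x' = f x, f y' = f y & dg_E x' y'].

Definition shi_le (A B : digraph) : Prop :=
  exists f : vert B -> vert A,
    is_strong_hom f /\ (forall a : vert A, exists b : vert B, f b = a).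

Definition dg_iso (A B : digraph) : Prop :=
  exists f : vert A -> vert B, bijective f /\
    forall x y, dg_E x y = dg_E (f x) (f y).

Definition complete_digraph (n : nat) : digraph := @Digraph n (fun _ _ => true).

Definition Av (D : digraph) : digraph -> Prop := fun E => ~ shi_le D E.

Definition wqo_class (C : digraph -> Prop) : Prop :=
  (~ exists s : nat -> digraph, (forall i, C (s i)) /\
       forall i, shi_le (s i.+1) (s i) /\ ~ shi_le (s i) (s i.+1)) /\
  (~ exists s : nat -> digraph, (forall i, C (s i)) /\
       forall i j, i <> j -> ~ shi_le (s i) (s j)).

(* Main.v *)
Require Import Defs.
From mathcomp Require Import all_boot zify.
From Stdlib Require Import Classical ClassicalEpsilon.
Set Implicit Arguments. Unset Strict Implicit. Unset Printing Implicit Defensive.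

Lemma surj_card (T1 T2 : finType) (f : T1 -> T2) :
  (forall a, exists b, f b = a) -> #|T2| <= #|T1|.
Proof.
move=> fs; rewrite -(size_codom f).
apply: leq_trans (card_size _).
apply: subset_leq_card; apply/subsetP => a _.
by have [b <-] := fs a; apply: codom_f.
Qed.

Lemma surj_inj (T1 T2 : finType) (f : T1 -> T2) :
  (forall a, exists b, f b = a) -> #|T1| = #|T2| -> injective f.
Proof.
move=> fs e; apply/injectiveP; rewrite /injectiveb /dinjectiveb.
apply/card_uniqP; rewrite size_map -cardE.
have -> : #|image f T1| = #|T2|.
  apply/eqP; rewrite eqn_leq max_card /=.
  apply: subset_leq_card; apply/subsetP => a _.
  by have [b <-] := fs a; apply: image_f.
by rewrite e.
Qed.

Lemma shi_le_card A B : shi_le A B -> dg_n A <= dg_n B.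
Proof.
move=> [f [_ fs]]; have := surj_card fs.
by rewrite !card_ord.
Qed.

Lemma min_ex (P : nat -> Prop) (g : nat -> nat) :
  (exists i, P i) -> exists i, P i /\ forall j, P j -> g i <= g j.
Proof.
move=> [i Pi].
suff: forall v i, P i -> g i <= v -> exists i, P i /\ forall j, P j -> g i <= g j.
  by move/(_ (g i) i Pi (leqnn _)).
elim=> [|v IH] k Pk gk.
  by exists k; split=> // j _; move: gk; rewrite leqn0 => /eqP ->.
case: (classic (exists i, P i /\ g i <= v)) => [[i' [Pi' gi']]|H].
  exact: (IH i').
exists k; split=> // j Pj; case: (leqP (g k) (g j)) => // lt.
exfalso; apply: H; exists j; split=> //; lia.
Qed.

Lemma no_desc (C : digraph -> Prop) :
  ~ exists s : nat -> digraph, (forall i, C (s i)) /\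
       forall i, shi_le (s i.+1) (s i) /\ ~ shi_le (s i) (s i.+1).
Proof.
move=> [s [_ Hs]].
have [i [_ Hi]] := min_ex (fun i => dg_n (s i)) (ex_intro (fun _ => True) 0 I).
have [le nle] := Hs i.
have eqn : dg_n (s i.+1) = dg_n (s i).
  by apply/eqP; rewrite eqn_leq shi_le_card //= Hi.
apply: nle; case: le => f [[fh fst] fs].
have finj : injective f.
  by apply: (surj_inj fs); rewrite !card_ord eqn.
have [g fg gf] : bijective f.
  apply: inj_card_bij finj _; by rewrite !card_ord eqn.
exists g; split; last by move=> a; exists (f a).
split.
- move=> x y exy.
  have : dg_E (f (g x)) (f (g y)) by rewrite !gf.
  move/fst => [x' [y' [e1 e2 e3]]].
  by rewrite -(finj _ _ e1) -(finj _ _ e2).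
- move=> x y exy; exists x, y; split=> //.
  by have := fh _ _ exy; rewrite !gf.
Qed.


Definition fam (b : bool) (k : nat) : digraph :=
  @Digraph k.+2 (fun x y => (nat_of_ord y != (nat_of_ord x).+1) && (b || (x != y))).

Lemma fam_antichain b i j : shi_le (fam b i) (fam b j) -> i = j.
Proof.
case: b => -[f [[fh fst] fs]];
  (suff finj : injective f by
    have h1 := leq_card f finj; have h2 := surj_card fs;
    move: h1 h2; rewrite /vert /= !card_ord => h1 h2; lia);
  move=> x y exy; apply/eqP/negPn/negP => nxy.
  - set a := f x.
    case: (ltnP (nat_of_ord a).+1 i.+2) => ha.
      have [z fz] := fs (Ordinal ha).
      have zx : nat_of_ord z = (nat_of_ord x).+1.
        apply/eqP; apply/negPn/negP => H.
        have := fh x z; rewrite /= H /= fz => /(_ isT).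
        by rewrite /= eqxx.
      have zy : nat_of_ord z = (nat_of_ord y).+1.
        apply/eqP; apply/negPn/negP => H.
        have := fh y z; rewrite /= H /= fz -exy => /(_ isT).
        by rewrite /= eqxx.
      by move/negP: nxy; apply; apply/eqP; apply: ord_inj; lia.
    have ha' : (nat_of_ord a).-1 < i.+2 by have := ltn_ord a; rewrite /=; lia.
    have a0 : 0 < nat_of_ord a by move: ha; rewrite ltnS; apply: leq_trans.
    have [z fz] := fs (Ordinal ha').
    have zx : nat_of_ord x = (nat_of_ord z).+1.
      apply/eqP; apply/negPn/negP => H.
      have := fh z x; rewrite /= H /= fz => /(_ isT).
      by rewrite prednK ?eqxx.
    have zy : nat_of_ord y = (nat_of_ord z).+1.
      apply/eqP; apply/negPn/negP => H.
      have := fh z y; rewrite /= H /= fz -exy => /(_ isT).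
      by rewrite prednK ?eqxx.
    by move/negP: nxy; apply; apply/eqP; apply: ord_inj; lia.
  - case: (boolP (nat_of_ord y == (nat_of_ord x).+1)) => H1.
      case: (boolP (nat_of_ord x == (nat_of_ord y).+1)) => H2.
        by move: H1 H2 => /eqP H1 /eqP H2; lia.
      have := fh y x; rewrite /= H2 /= eq_sym nxy => /(_ isT).
      by rewrite exy eqxx andbF.
    have := fh x y; rewrite /= H1 /= nxy => /(_ isT).
    by rewrite exy eqxx andbF.
Qed.

Lemma fam1_av D k :
  (dg_n D = 0 \/ exists a : vert D, ~~ dg_E a a) -> ~ shi_le D (fam true k).
Proof.
move=> H [f [[fh fst] fs]]; case: H => [H0|[a na]].
  by move: (f ord0); rewrite /vert H0 => -[].
have [x fx] := fs a.
have : dg_E x x by rewrite /= andbT neq_ltn ltnSn.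
by move/fh; rewrite fx; apply/negP.
Qed.

Lemma fam2_av D k :
  (forall a : vert D, dg_E a a) -> (exists u v : vert D, ~~ dg_E u v) ->
  ~ shi_le D (fam false k).
Proof.
move=> refl [u [v nuv]] [f [[fh fst] fs]].
have [x fx] := fs u.
have := fst x x; rewrite fx => /(_ (refl u)) [x' [y' [fx' fy' exy]]].
have nx'y' : x' != y' by move: exy => /andP[_].
have [q fq] := fs v.
have uv : u != v by apply: contraNneq nuv => ->.
have qx : nat_of_ord q = (nat_of_ord x').+1.
  apply/eqP; apply/negPn/negP => H.
  have : dg_E x' q.
    rewrite /= H /=; apply: contraNneq uv => e.
    by rewrite -fx' e fq.
  by move/fh; rewrite fx' fq (negbTE nuv).
have qy : nat_of_ord q = (nat_of_ord y').+1.
  apply/eqP; apply/negPn/negP => H.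
  have : dg_E y' q.
    rewrite /= H /=; apply: contraNneq uv => e.
    by rewrite -fy' e fq.
  by move/fh; rewrite fy' fq (negbTE nuv).
by move/negP: nx'y'; apply; apply/eqP; apply: ord_inj; lia.
Qed.


Section Match.
Variable E : digraph.
Notation V := (vert E).

Definition ep (M : seq (V * V)) : seq V := unzip1 M ++ unzip2 M.
Definition is_match (M : seq (V * V)) :=
  uniq (ep M) && all (fun e => dg_E e.1 e.2) M.

Lemma size_ep M : size (ep M) = size M + size M.
Proof. by rewrite /ep size_cat !size_map. Qed.

Lemma greedy : exists M, is_match M /\
  forall x y : V, x != y -> dg_E x y -> (x \in ep M) || (y \in ep M).
Proof.
suff: forall k M, is_match M -> #|V| - size (ep M) < k -> exists M, is_match M /\
  forall x y : V, x != y -> dg_E x y -> (x \in ep M) || (y \in ep M).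
  by move/(_ (#|V|.+1) [::] isT); apply; rewrite subn0.
elim=> [//|k IH] M Mm Mk.
case: (classic (exists x y : V, [/\ x != y, dg_E x y, x \notin ep M & y \notin ep M]))
  => [[x [y [nxy exy nx ny]]]|H]; last first.
  exists M; split=> // x y nxy exy.
  apply/negPn/negP; rewrite negb_or => /andP[nx ny].
  by apply: H; exists x, y.
move: Mm => /andP[u a].
have Mm' : is_match ((x, y) :: M).
  rewrite /is_match /= exy a andbT.
  rewrite -cat1s uniq_catCA cat1s.
  rewrite cons_uniq -/(ep M) u ny andbT mem_cat in_cons (negbTE nxy) /=.
  by rewrite andbT -mem_cat.
apply: (IH _ Mm').
have h2 : #|ep ((x,y)::M)| = size (ep ((x,y)::M)).
  by apply/card_uniqP; case/andP: Mm'.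
have h1 : #|ep ((x,y)::M)| <= #|V| := max_card _.
move: h1 h2 Mk; rewrite !size_ep /= => h1 h2 Mk; lia.
Qed.

End Match.

Lemma match_shi (D E : digraph) (M : seq (vert E * vert E)) :
  (forall x y : vert D, dg_E x y) -> 0 < dg_n D -> is_match M ->
  dg_n D * dg_n D <= size M -> shi_le D E.
Proof.
move=> Dc d0 /andP[u a] hL.
set d := dg_n D in d0 hL *; set L := size M in hL.
have x0 : vert D := Ordinal d0.
pose h (v : vert E) : vert D := insubd x0
  (if index v (ep M) < L then index v (ep M) %/ d else (index v (ep M) - L) %% d).
have key : forall i j : vert D, exists a b, [/\ h a = i, h b = j & dg_E a b].
  move=> i j.
  have hi := ltn_ord i; have hj := ltn_ord j.
  pose e := i * d + j.
  have he : e < L by apply: leq_trans hL; rewrite /e; nia.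
  have dv : vert E.
    have : 0 < size M by rewrite -/L; lia.
    by case: (M) => [|m0 ?] //= _; exact: m0.1.
  exists (nth dv (ep M) e), (nth dv (ep M) (L + e)).
  have sz := size_ep M.
  have ia : index (nth dv (ep M) e) (ep M) = e.
    by rewrite index_uniq // sz; lia.
  have ib : index (nth dv (ep M) (L + e)) (ep M) = L + e.
    by rewrite index_uniq // sz; lia.
  split.
  - apply: val_inj; rewrite /h ia he val_insubd.
    have -> : e %/ d = i by rewrite /e divnMDl // divn_small // addn0.
    by rewrite hi.
  - apply: val_inj; rewrite /h ib.
    have -> : (L + e < L) = false by lia.
    have -> : L + e - L = e by lia.
    rewrite val_insubd.
    have -> : e %% d = j by rewrite /e modnMDl modn_small.
    by rewrite hj.
  - rewrite /ep !nth_cat !size_map.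
    have -> : (L + e < size M) = false by rewrite /L; lia.
    have -> : L + e - size M = e by rewrite /L; lia.
    rewrite he (nth_map (dv, dv)) // (nth_map (dv, dv)) //.
    by move/(all_nthP (dv, dv)): a; apply.
exists h; split.
- split; first by move=> x y _; apply: Dc.
  move=> x y _; have [a' [b' [ha hb e]]] := key (h x) (h y).
  by exists a', b'.
- by move=> i; have [a' [_ [ha _ _]]] := key i i; exists a'.
Qed.

Lemma cover_ex (D E : digraph) :
  (forall x y : vert D, dg_E x y) -> 0 < dg_n D -> ~ shi_le D E ->
  exists cs : seq (vert E), [/\ uniq cs, size cs <= (dg_n D * dg_n D).*2 &
    forall x y : vert E, x != y -> dg_E x y -> (x \in cs) || (y \in cs)].
Proof.
move=> Dc d0 nsh; have [M [Mm cov]] := greedy E.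
case: (leqP (dg_n D * dg_n D) (size M)) => hM.
  by case: nsh; apply: (match_shi Dc d0 Mm hM).
exists (ep M); split=> //; first by case/andP: Mm.
by rewrite size_ep -addnn; lia.
Qed.


Section Desc.
Variable K : nat.
Definition TT := (bool * {ffun 'I_K -> bool} * {ffun 'I_K -> bool})%type.
Definition getf (g : {ffun 'I_K -> bool}) (k : nat) : bool :=
  if (insub k : option 'I_K) is Some k' then g k' else false.

Lemma getfE g k (hk : k < K) : getf g k = g (Ordinal hk).
Proof. by rewrite /getf insubT. Qed.

Section G.
Variables (E : digraph) (cs : seq (vert E)).
Definition ty (v : vert E) : TT :=
  (dg_E v v, [ffun k : 'I_K => if onth cs k is Some u then dg_E v u else false],
   [ffun k : 'I_K => if onth cs k is Some u then dg_E u v else false]).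
Definition crn (k l : nat) : bool :=
  if onth cs k is Some x then (if onth cs l is Some y then dg_E x y else false)
  else false.
Definition pos (v : vert E) : nat + TT :=
  if v \in cs then inl (index v cs) else inr (ty v).
Definition Lset (t : TT) := [set v | (v \notin cs) && (ty v == t)].
Definition cnt t := #|Lset t|.
Definition desc := (inord (size cs) : 'I_K.+1,
  [ffun p : 'I_K * 'I_K => crn p.1 p.2], [ffun t => 0 < cnt t]).
Definition cov := [/\ uniq cs, size cs <= K &
  forall x y : vert E, x != y -> dg_E x y -> (x \in cs) || (y \in cs)].
End G.

Definition eb (cr : nat -> nat -> bool) (p q : nat + TT) (b : bool) : bool :=
  match p, q with
  | inl k, inl l => cr k l
  | inl k, inr t => getf t.2 k
  | inr t, inl k => getf t.1.2 k
  | inr t, inr _ => b && t.1.1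
  end.

Lemma onth_index (T : eqType) (s : seq T) x : x \in s -> onth s (index x s) = Some x.
Proof.
move=> xs; rewrite onthE (nth_map x) ?index_mem // nth_index //.
Qed.

Lemma edge_char E (cs : seq (vert E)) : cov cs -> forall x y : vert E,
  dg_E x y = eb (crn cs) (pos cs x) (pos cs y) (x == y).
Proof.
move=> [u sz cv] x y; rewrite /pos.
have ix : forall z, z \in cs -> index z cs < K.
  by move=> z zs; apply: leq_trans sz; rewrite index_mem.
case: ifP => xs; case: ifP => ys /=.
- by rewrite /crn !onth_index.
- by rewrite (getfE _ (ix _ xs)) ffunE /= onth_index.
- by rewrite (getfE _ (ix _ ys)) ffunE /= onth_index.
- case: eqP => [<-|/eqP nxy] //=.
  apply/negbTE/negP => exy; have := cv _ _ nxy exy.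
  by rewrite xs ys.
Qed.

Lemma eb_ext cr cr' p q b : (forall k l, cr k l = cr' k l) ->
  eb cr p q b = eb cr' p q b.
Proof. by move=> H; case: p q => [k|t] [l|t'] //=. Qed.

Lemma eb_false cr p q b : eb cr p q false -> eb cr p q b.
Proof. by case: p q => [k|t] [l|t'] //=. Qed.

Lemma exists_index (T : eqType) (s : seq T) k : uniq s -> k < size s ->
  exists w, w \in s /\ index w s = k.
Proof.
case: s => [//|w0 s] u hk.
by exists (nth w0 (w0 :: s) k); rewrite mem_nth // index_uniq.
Qed.

Lemma recon E E' (cs : seq (vert E)) (cs' : seq (vert E')) :
  cov cs -> cov cs' -> desc cs = desc cs' ->
  (forall t, cnt cs t <= cnt cs' t) -> shi_le E E'.
Proof.
move=> cv cv' [dsz dcr dsu] hcnt.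
have [u sz cov1] := cv; have [u' sz' cov1'] := cv'.
have esz : size cs = size cs'.
  by move: dsz => /(congr1 (@nat_of_ord _)); rewrite !inordK // ltnS.
have ecr : forall k l, crn cs k l = crn cs' k l.
  move=> k l.
  case: (ltnP k K) => hk; last by rewrite /crn !(onth_default (leq_trans _ hk)).
  case: (ltnP l K) => hl; last first.
    by rewrite /crn (onth_default (leq_trans sz hl)) (onth_default (leq_trans sz' hl));
       case: onth; case: onth.
  by have := congr1 (fun g : {ffun 'I_K * 'I_K -> bool} => g (Ordinal hk, Ordinal hl)) dcr; rewrite !ffunE.
have esu : forall t, (0 < cnt cs t) = (0 < cnt cs' t).
  by move=> t; have := congr1 (fun g : {ffun TT -> bool} => g t) dsu; rewrite !ffunE.
case: (posnP (dg_n E)) => [E0|Epos].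
  have H0 : vert E' -> False.
    move=> w; case: (boolP (w \in cs')) => ws.
      have : 0 < size cs by rewrite esz; case: (cs') ws.
      by case: (cs) => // v; move: v; rewrite /vert E0 => -[].
    have : 0 < cnt cs' (ty cs' w).
      by apply/card_gt0P; exists w; rewrite inE ws eqxx.
    rewrite -esu => /card_gt0P [v _]; by move: v; rewrite /vert E0 => -[].
  exists (fun w => match H0 w with end); split.
    by split=> x; case: (H0 x).
  by move=> a; move: a; rewrite /vert E0 => -[].
pose x0 : vert E := Ordinal Epos.
pose f (w : vert E') : vert E :=
  match pos cs' w with
  | inl k => nth x0 cs k
  | inr t => nth x0 (enum (Lset cs t))
      (minn (index w (enum (Lset cs' t))) (cnt cs t).-1)
  end.
have posf : forall w, pos cs (f w) = pos cs' w.
  move=> w; rewrite /f; case E1: (pos cs' w) => [k|t].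
    move: E1; rewrite /pos; case: ifP => // ws [<-].
    have hk : index w cs' < size cs by rewrite esz index_mem.
    by rewrite mem_nth // index_uniq.
  move: E1; rewrite /pos; case: ifP => // ws [<-].
  have c0 : 0 < cnt cs (ty cs' w).
    by rewrite esu; apply/card_gt0P; exists w; rewrite inE ws eqxx.
  have : nth x0 (enum (Lset cs (ty cs' w)))
      (minn (index w (enum (Lset cs' (ty cs' w)))) (cnt cs (ty cs' w)).-1)
      \in Lset cs (ty cs' w).
    rewrite -mem_enum mem_nth // -cardE -/(cnt _ _).
    by move: c0; lia.
  by rewrite inE => /andP[/negbTE -> /eqP ->].
have fsur : forall a, exists b, f b = a.
  move=> v; case: (boolP (v \in cs)) => vs.
    have [w [ws iw]] : exists w, w \in cs' /\ index w cs' = index v cs.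
      by apply: exists_index => //; rewrite -esz index_mem.
    exists w; rewrite /f /pos ws iw nth_index //.
  set t := ty cs v.
  have vL : v \in enum (Lset cs t) by rewrite mem_enum inE vs eqxx.
  have r_lt : index v (enum (Lset cs t)) < cnt cs t by rewrite /cnt cardE index_mem.
  have [w [wL iw]] : exists w, w \in enum (Lset cs' t) /\
      index w (enum (Lset cs' t)) = index v (enum (Lset cs t)).
    apply: exists_index; first exact: enum_uniq.
    by rewrite -cardE; apply: leq_trans (hcnt t).
  move: (wL); rewrite mem_enum inE => /andP[wn /eqP wt].
  exists w; rewrite /f /pos (negbTE wn) wt iw.
  by rewrite (minn_idPl _) ?nth_index //; lia.
exists f; split=> //; split.
- move=> w1 w2; rewrite (edge_char cv' w1 w2) (edge_char cv (f w1) (f w2)) !posf.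
  rewrite (eb_ext _ _ _ ecr).
  case: eqP => [->|_]; first by rewrite eqxx.
  exact: eb_false.
- move=> w1 w2; rewrite (edge_char cv (f w1) (f w2)) !posf => h.
  case: eqP h => [e12|ne] h.
    exists w1, w1; split=> //.
    have ep : pos cs' w2 = pos cs' w1 by rewrite -!posf e12.
    by rewrite (edge_char cv' w1 w1) eqxx -(eb_ext _ _ _ ecr) -{2}ep.
  exists w1, w2; split=> //.
  rewrite (edge_char cv' w1 w2) -(eb_ext _ _ _ ecr).
  by case: eqP => [e|//]; case: ne; rewrite e.
Qed.
End Desc.


Definition inf (P : nat -> Prop) := forall m, exists k, m <= k /\ P k.

Lemma inf_color (F : eqType) (a : nat -> F) (l : seq F) (P : nat -> Prop) :
  inf P -> (forall k, P k -> a k \in l) -> exists c, inf (fun k => P k /\ a k = c).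
Proof.
elim: l P => [|c l IH] P iP hl.
  by have [k [_ Pk]] := iP 0; have := hl _ Pk.
case: (classic (inf (fun k => P k /\ a k = c))) => [H|H]; first by exists c.
have [m Hm] : exists m, forall k, m <= k -> ~ (P k /\ a k = c).
  apply: NNPP => H1; apply: H => m; apply: NNPP => H2; apply: H1; exists m.
  by move=> k mk Hk; apply: H2; exists k.
have iP' : inf (fun k => P k /\ m <= k).
  move=> m'; have [k [hk Pk]] := iP (maxn m m').
  by exists k; split; [lia | split => //; lia].
have hl' : forall k, P k /\ m <= k -> a k \in l.
  move=> k [Pk mk]; have := hl _ Pk; rewrite in_cons => /orP[/eqP e|//].
  by case: (Hm _ mk).
have [c' Hc'] := IH _ iP' hl'.
exists c' => m'; have [k [hk [[Pk _] ak]]] := Hc' m'.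
by exists k.
Qed.

Lemma inf_mono (f : nat -> nat) (P : nat -> Prop) : inf P ->
  exists Q : nat -> Prop, (forall k, Q k -> P k) /\ inf Q /\
    forall i j, Q i -> Q j -> i < j -> f i <= f j.
Proof.
move=> iP; exists (fun k => P k /\ forall l, k < l -> P l -> f k <= f l).
split; first by move=> k [].
split; last by move=> i j [Pi Hi] [Pj _] ij; apply: Hi.
move=> m; have [k [hk Pk]] := iP m.
have [k' [[mk' Pk'] Hk']] := @min_ex (fun k => m <= k /\ P k) f (ex_intro _ k (conj hk Pk)).
exists k'; split=> //; split=> // l kl Pl; apply: Hk'; split=> //; lia.
Qed.

Lemma dickson_list (T : eqType) (b : nat -> T -> nat) (l : seq T) (P : nat -> Prop) :
  inf P -> exists Q : nat -> Prop, (forall k, Q k -> P k) /\ inf Q /\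
    forall t, t \in l -> forall i j, Q i -> Q j -> i < j -> b i t <= b j t.
Proof.
elim: l => [|t l IH] iP.
  by exists P; split=> //; split.
have [Q1 [Q1P [iQ1 HQ1]]] := IH iP.
have [Q2 [Q2Q1 [iQ2 HQ2]]] := inf_mono (fun k => b k t) iQ1.
exists Q2; split; first by move=> k /Q2Q1 /Q1P.
split=> // t'; rewrite in_cons => /orP[/eqP ->|t'l] i j Qi Qj ij.
  exact: HQ2.
by apply: HQ1 => //; apply: Q2Q1.
Qed.

Lemma dickson (DD TT : finType) (a : nat -> DD) (b : nat -> TT -> nat) :
  exists i j, i < j /\ a i = a j /\ forall t, b i t <= b j t.
Proof.
have iT : inf (fun _ => True) by move=> m; exists m.
have [c ic] := @inf_color _ a (enum DD) _ iT (fun k _ => mem_enum _ _).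
have [Q [QP [iQ HQ]]] := dickson_list b (enum TT) ic.
have [i [_ Qi]] := iQ 0; have [j [ij Qj]] := iQ i.+1.
exists i, j; split=> //; split; first by rewrite (proj2 (QP _ Qi)) (proj2 (QP _ Qj)).
by move=> t; apply: HQ => //; rewrite mem_enum.
Qed.

Theorem theorem4p3 (D : digraph) :
  wqo_class (Av D) <-> exists n : nat, 1 <= n /\ dg_iso D (complete_digraph n).
Proof.
split.
- move=> [_ Hanti].
  case: (classic ((0 < dg_n D) /\ forall x y : vert D, dg_E x y)) => [[d0 Dc]|Hn].
    exists (dg_n D); split=> //.
    exists (fun x : vert D => (x : vert (complete_digraph (dg_n D)))); split.
      by exists id.
    by move=> x y; rewrite Dc.
  exfalso.
  case: (classic (dg_n D = 0 \/ exists a : vert D, ~~ dg_E a a)) => [H1|H1].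
    apply: Hanti; exists (fam true); split; first by move=> i; exact: fam1_av.
    by move=> i j ij sh; apply: ij; exact: fam_antichain sh.
  have refl : forall a : vert D, dg_E a a.
    move=> a; apply/negPn/negP => na; apply: H1; right; by exists a.
  have d0 : 0 < dg_n D by case: (posnP (dg_n D)) => // e; case: H1; left.
  have nc : exists u v : vert D, ~~ dg_E u v.
    apply: NNPP => H; apply: Hn; split=> // x y.
    apply/negPn/negP => nxy; apply: H; by exists x, y.
  apply: Hanti; exists (fam false); split; first by move=> i; exact: fam2_av.
  by move=> i j ij sh; apply: ij; exact: fam_antichain sh.
- move=> [n [n1 [phi [phib phie]]]].
  have Dc : forall x y : vert D, dg_E x y by move=> x y; rewrite phie.
  have d0 : 0 < dg_n D.
    by have := bij_eq_card phib; rewrite /vert /= !card_ord => ->.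
  split; first exact: no_desc.
  move=> [s [sAv santi]].
  pose K := (dg_n D * dg_n D).*2.
  have hcs : forall i, exists cs : seq (vert (s i)), cov K cs.
    move=> i; have [cs [u sz cv]] := cover_ex Dc d0 (sAv i).
    by exists cs; split.
  pose cs i := proj1_sig (constructive_indefinite_description _ (hcs i)).
  have cvi : forall i, cov K (cs i).
    by move=> i; exact: (proj2_sig (constructive_indefinite_description _ (hcs i))).
  have [i [j [ij [da db]]]] :=
    dickson (fun i => desc K (cs i)) (fun i (t : TT K) => @cnt K _ (cs i) t).
  apply: (santi i j _ (recon (cvi i) (cvi j) da db)).
  by move=> e; move: ij; rewrite e ltnn.
Qed.
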